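(* Let $n\ge1$, $\boldsymbol\mu=(\mu_1,\dots,\mu_n)\in[0,1]^n$ and let $c$ be a positive integer. Let $\Omega=\{\mathbf{w}\in\{0,1\}^n:\sum_{i=1}^n w_i\ge c\}$. Then $$\max_{P\in\mathfrak{P}_{\boldsymbol\mu}}P(\Omega)=P^*_{\boldsymbol\mu}(\Omega).$$
   Context: $\mathfrak{P}$ is the set of probability distributions $P$ on $\{0,1\}^n$, written via conditionals as $P(\mathbf{w})=p_1(w_1)p_2(w_2|w_1)\cdots p_n(w_n|w_{n-1},\dots,w_1)$. $\mathfrak{P}_{\boldsymbol\mu}$ is the set of $P\in\mathfrak{P}$ such that $p_i(1|w_{i-1},\dots,w_1)\le\mu_i$ for every $i\in\{1,\dots,n\}$ and every history $(w_1,\dots,w_{i-1})\in\{0,1\}^{i-1}$ (for $i=1$: $p_1(1)\le\mu_1$). $P^*_{\boldsymbol\mu}$ is the product distribution $P^*_{\boldsymbol\mu}(\mathbf{w})=\prod_{i=1}^n p_i^*(w_i)$ with $p_i^*(1)=\mu_i$, $p_i^*(0)=1-\mu_i$. *)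

(* Defs.v *)
From mathcomp Require Import all_boot all_order all_algebra.
Set Implicit Arguments. Unset Strict Implicit. Unset Printing Implicit Defensive.
Import Order.TTheory GRing.Theory Num.Theory.
Local Open Scope ring_scope.

(* A distribution P on {0,1}^n is given through its conditionals:
   cond i h = p_i(1 | h) for a history h = (w_1,...,w_i) (as a seq of length i),
   for i = 0..n-1 (0-based). *)
Definition is_kernel (R : realFieldType) (n : nat) (cond : nat -> seq bool -> R) :=
  forall (i : nat) (h : seq bool), (i < n)%N -> size h = i ->
    0 <= cond i h <= 1.

Definition probK (R : realFieldType) (n : nat) (cond : nat -> seq bool -> R)
    (w : n.-tuple bool) : R :=
  \prod_(i < n) (if tnth w i then cond i (take i w) else 1 - cond i (take i w)).

Definition in_Pmu (R : realFieldType) (n : nat) (mu : 'I_n -> R)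
    (cond : nat -> seq bool -> R) :=
  is_kernel n cond /\
  forall (i : 'I_n) (h : seq bool), size h = i -> cond i h <= mu i.

Definition Pstar (R : realFieldType) (n : nat) (mu : 'I_n -> R)
    (w : n.-tuple bool) : R :=
  \prod_(i < n) (if tnth w i then mu i else 1 - mu i).

Definition Omega (n c : nat) : pred (n.-tuple bool) :=
  fun w => (c <= \sum_(i < n) nat_of_bool (tnth w i))%N.

Definition probOf (R : realFieldType) (n : nat) (P : n.-tuple bool -> R)
    (A : pred (n.-tuple bool)) : R :=
  \sum_(w : n.-tuple bool | A w) P w.
Arguments Omega n c : clear implicits.

(* Main.v *)
Require Import Defs.
From mathcomp Require Import all_boot all_order all_algebra.
Import Order.TTheory GRing.Theory Num.Theory.
Local Open Scope ring_scope.
Set Implicit Arguments. Unset Strict Implicit. Unset Printing Implicit Defensive.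
From mathcomp Require Import ring lra.

Lemma sum_tupleS (R : realFieldType) n (F : (n.+1).-tuple bool -> R) :
  \sum_w F w = \sum_(t : n.-tuple bool) (F [tuple of true :: t] + F [tuple of false :: t]).
Proof.
rewrite (reindex (fun p : bool * n.-tuple bool => [tuple of p.1 :: p.2])) /=; last first.
  exists (fun w : (n.+1).-tuple bool => (thead w, [tuple of behead w])).
    by case=> b t _; congr pair; apply/val_inj.
  move=> w _; apply/val_inj => /=; case: w => [[|x s] //=].
rewrite -(@pair_bigA _ _ _ bool (n.-tuple bool) (fun b t => F [tuple of b :: t])) /=.
rewrite exchange_big /=.
by apply: eq_bigr => t _; rewrite big_bool.
Qed.

Definition fac (R : realFieldType) (x : R) (b : bool) := if b then x else 1 - x.
Definition PS (R : realFieldType) n (mu : nat -> R) (w : n.-tuple bool) : R :=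
  \prod_(i < n) fac (mu i) (tnth w i).

Lemma probK_cons (R : realFieldType) n (cond : nat -> seq bool -> R) b (t : n.-tuple bool) :
  probK cond [tuple of b :: t] = fac (cond 0%N [::]) b * probK (fun i h => cond i.+1 (b :: h)) t.
Proof.
rewrite /probK big_ord_recl /=; congr (_ * _).
by apply: eq_bigr => i _; rewrite tnthS.
Qed.

Lemma PS_cons (R : realFieldType) n (mu : nat -> R) b (t : n.-tuple bool) :
  PS mu [tuple of b :: t] = fac (mu 0%N) b * PS (fun i => mu i.+1) t.
Proof.
rewrite /PS big_ord_recl /=; congr (_ * _).
by apply: eq_bigr => i _; rewrite tnthS.
Qed.

Lemma PS_ge0 (R : realFieldType) n (mu : nat -> R) (w : n.-tuple bool) :
  (forall i, (i < n)%N -> 0 <= mu i <= 1) -> 0 <= PS mu w.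
Proof.
move=> H; apply: prodr_ge0 => i _; have /andP[h0 h1] := H i (ltn_ord i).
by rewrite /fac; case: (tnth w i) => //; rewrite subr_ge0.
Qed.

Lemma gen (R : realFieldType) n : forall (cond : nat -> seq bool -> R) (mu : nat -> R)
  (f : n.-tuple bool -> R),
 (forall i h, (i < n)%N -> size h = i -> 0 <= cond i h <= 1 /\ cond i h <= mu i) ->
 (forall i, (i < n)%N -> 0 <= mu i <= 1) ->
 (forall w w' : n.-tuple bool, (forall i, tnth w i ==> tnth w' i) -> f w <= f w') ->
 \sum_w probK cond w * f w <= \sum_w PS mu w * f w.
Proof.
elim: n => [|n IH] cond mu f Hc Hm Hf.
  by apply: ler_sum => w _; rewrite /probK /PS !big_ord0.
have monoc : forall b (w w' : n.-tuple bool), (forall i, tnth w i ==> tnth w' i) ->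
   f [tuple of b :: w] <= f [tuple of b :: w'].
  move=> b w w' H; apply: Hf => i.
  case: (unliftP ord0 i) => [j ->|->]; first by rewrite !tnthS.
  by rewrite /= implybb.
have Hc' : forall b i h, (i < n)%N -> size h = i ->
   0 <= cond i.+1 (b :: h) <= 1 /\ cond i.+1 (b :: h) <= mu i.+1.
  by move=> b i h Hi Hh; apply: Hc => //=; rewrite Hh.
have Hm' : forall i, (i < n)%N -> 0 <= mu i.+1 <= 1 by move=> i Hi; apply: Hm.
rewrite !sum_tupleS.
under eq_bigr => t _ do rewrite !probK_cons -!mulrA.
under [X in _ <= X]eq_bigr => t _ do rewrite !PS_cons -!mulrA.
rewrite !big_split /= -!mulr_sumr /fac.
set S1 := \sum_t _ * _. set S0 := \sum_t _ * _.
set T1 := \sum_t _ * _. set T0 := \sum_t _ * _.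
have hS1 : S1 <= T1 by apply: (IH _ _ (fun t => f [tuple of true :: t])); [exact: Hc' | exact: Hm' | exact: monoc].
have hS0 : S0 <= T0 by apply: (IH _ _ (fun t => f [tuple of false :: t])); [exact: Hc' | exact: Hm' | exact: monoc].
have hT : T0 <= T1.
  rewrite /T0 /T1; apply: ler_sum => t _; apply: ler_wpM2l; first exact: PS_ge0.
  by apply: Hf => i; case: (unliftP ord0 i) => [j ->|->]; rewrite ?tnthS ?implybb.
have [/andP[p0 p1] pm] := Hc 0%N [::] (ltn0Sn _) erefl.
have /andP[m0 m1] := Hm 0%N (ltn0Sn _).
have h1 : 0 <= cond 0%N [::] * (T1 - S1) by apply: mulr_ge0; rewrite ?subr_ge0.
have h2 : 0 <= (1 - cond 0%N [::]) * (T0 - S0) by apply: mulr_ge0; rewrite ?subr_ge0.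
have h3 : 0 <= (mu 0%N - cond 0%N [::]) * (T1 - T0) by apply: mulr_ge0; rewrite ?subr_ge0.
rewrite -subr_ge0.
have -> : mu 0%N * T1 + (1 - mu 0%N) * T0 - (cond 0%N [::] * S1 + (1 - cond 0%N [::]) * S0)
  = cond 0%N [::] * (T1 - S1) + (1 - cond 0%N [::]) * (T0 - S0) + (mu 0%N - cond 0%N [::]) * (T1 - T0).
  by ring.
by rewrite !addr_ge0.
Qed.

Lemma probOfE (R : realFieldType) n (P : n.-tuple bool -> R) (A : pred (n.-tuple bool)) :
  probOf P A = \sum_w P w * (A w)%:R.
Proof.
rewrite /probOf big_mkcond; apply: eq_bigr => w _.
by case: (A w); rewrite ?mulr1 ?mulr0.
Qed.

Theorem mainTheorem14 (R : realFieldType) (n : nat) (mu : 'I_n -> R) (c : nat) :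
  (1 <= n)%N ->
  (forall i, 0 <= mu i <= 1) ->
  (0 < c)%N ->
  (exists cond, in_Pmu mu cond /\
     probOf (probK cond) (Omega n c) = probOf (Pstar mu) (Omega n c)) /\
  (forall cond, in_Pmu mu cond ->
     probOf (probK cond) (Omega n c) <= probOf (Pstar mu) (Omega n c)).
Proof.
move=> _ Hmu _.
pose muN (i : nat) : R := if @insub _ (fun j => j < n)%N _ i is Some j then mu j else 0.
have muNE : forall j : 'I_n, muN j = mu j by move=> j; rewrite /muN valK.
have muN01 : forall i, 0 <= muN i <= 1.
  by move=> i; rewrite /muN; case: insub => [j|]; rewrite ?Hmu ?lexx ?ler01.
have PsE : forall w, Pstar mu w = PS muN w.
  by move=> w; rewrite /Pstar /PS; apply: eq_bigr => i _; rewrite muNE.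
split.
  exists (fun i _ => muN i); split.
    split; first by move=> i h _ _; apply: muN01.
    by move=> i h _; rewrite muNE.
  rewrite !probOfE; apply: eq_bigr => w _; congr (_ * _).
  by rewrite /probK /Pstar; apply: eq_bigr => i _; rewrite muNE.
move=> cond [Hk Hb].
rewrite !probOfE; under [X in _ <= X]eq_bigr => w _ do rewrite PsE.
apply: gen => //.
- move=> i h Hi Hh; split; first exact: Hk.
  have := Hb (Ordinal Hi) h Hh; rewrite -muNE //.
- move=> w w' H; rewrite ler_nat.
  have hs : (\sum_(i < n) nat_of_bool (tnth w i) <= \sum_(i < n) nat_of_bool (tnth w' i))%N.
    by apply: leq_sum => i _; have := H i; case: (tnth w i); case: (tnth w' i).
  case: (boolP (Omega n c w)) => hw //=.
  by have -> : Omega n c w' by rewrite /Omega (leq_trans hw hs).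
Qed.
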